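(* Let $d\ge1$ and $\alpha>0$. Suppose that for every $n\ge1$ and every finite hypergraph $\mathcal{T}$ of discrete $d$-intervals on $[n]$ one has $\tau^*_\ell(\mathcal{T})\le\alpha d\,\nu_\ell(\mathcal{T})$, where $\ell(T)=|T|$. Then for every hypergraph $H$ of $d$-intervals (on $\mathbb{R}$) and every weight system $w$ on $H$, $\tau_w(H)\le\alpha d^2\,\nu_w(H)$.
   Context: A $d$-interval is a union of at most $d$ pairwise disjoint closed intervals of $\mathbb{R}$; a hypergraph of $d$-intervals is a finite family of $d$-intervals, regarded as a hypergraph on vertex set $\mathbb{R}$. A discrete $d$-interval on $[n]=\{1,\dots,n\}$ is a union of at most $d$ pairwise disjoint nonempty sets of consecutive integers; a hypergraph of discrete $d$-intervals on $[n]$ is a finite family of these, regarded as a hypergraph on vertex set $[n]$. A matching is a set of pairwise disjoint edges. For a weight function $w$ on the edges (with values in $\mathbb{N}$; for $\ell$, $\ell(T)=|T|$), $\nu_w$ is the maximum of $\sum_{h\in M}w(h)$ over matchings $M$; a $w$-cover is a finitely supported $g$ from the vertex set to $\mathbb{N}$ with $\sum_{v\in h}g(v)\ge w(h)$ for every edge $h$, and $\tau_w$ is the minimum of $\sum_v g(v)$ over $w$-covers; $\tau^*_w$ is defined the same way with $g$ taking values in $\mathbb{R}_{\ge0}$ (infimum). A weight system on $H$ is a function $w:H\to\mathbb{N}$. *)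

(* Defs.v *)
From Stdlib Require Import Reals List Arith.
Import ListNotations.
Open Scope R_scope.

Definition Rsum (l : list R) : R := fold_right Rplus 0 l.

Definition in_ival (I : R * R) (x : R) : Prop := fst I <= x <= snd I.

Definition in_ivalb (I : R * R) (x : R) : bool :=
  if Rle_dec (fst I) x then (if Rle_dec x (snd I) then true else false) else false.

Definition in_dint (h : list (R * R)) (x : R) : Prop := Exists (fun I => in_ival I x) h.

Definition in_dintb (h : list (R * R)) (x : R) : bool := existsb (fun I => in_ivalb I x) h.

Definition ivals_disjoint (I J : R * R) : Prop := forall x, ~ (in_ival I x /\ in_ival J x).

Definition is_dinterval (d : nat) (h : list (R * R)) : Prop :=
  (1 <= length h <= d)%nat /\
  Forall (fun I => fst I <= snd I) h /\
  ForallOrdPairs ivals_disjoint h.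

(* A hypergraph of d-intervals: a finite family (list, repetitions allowed)
   of d-intervals; edges are indexed by positions 0 .. length H - 1. *)
Definition is_dint_hypergraph (d : nat) (H : list (list (R * R))) : Prop :=
  Forall (is_dinterval d) H.

Definition edge (H : list (list (R * R))) (i : nat) : list (R * R) := nth i H [].

Definition is_matching (H : list (list (R * R))) (M : list nat) : Prop :=
  NoDup M /\ (forall i, In i M -> (i < length H)%nat) /\
  (forall i j, In i M -> In j M -> i <> j ->
     forall x, ~ (in_dint (edge H i) x /\ in_dint (edge H j) x)).

Definition match_weight (w : nat -> nat) (M : list nat) : nat := list_sum (map w M).

Definition IsNu (H : list (list (R * R))) (w : nat -> nat) (nu : nat) : Prop :=
  (exists M, is_matching H M /\ match_weight w M = nu) /\
  (forall M, is_matching H M -> (match_weight w M <= nu)%nat).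

Definition fin_supp (S : list R) (g : R -> nat) : Prop :=
  NoDup S /\ forall x, ~ In x S -> g x = 0%nat.

Definition total (S : list R) (g : R -> nat) : nat := list_sum (map g S).

Definition edge_sum (S : list R) (g : R -> nat) (h : list (R * R)) : nat :=
  list_sum (map (fun v => if in_dintb h v then g v else 0%nat) S).

Definition is_wcover (H : list (list (R * R))) (w : nat -> nat)
    (S : list R) (g : R -> nat) : Prop :=
  fin_supp S g /\ forall i, (i < length H)%nat -> (w i <= edge_sum S g (edge H i))%nat.

Definition IsTau (H : list (list (R * R))) (w : nat -> nat) (t : nat) : Prop :=
  (exists S g, is_wcover H w S g /\ total S g = t) /\
  (forall S g, is_wcover H w S g -> (t <= total S g)%nat).

Definition in_divalb (I : nat * nat) (v : nat) : bool :=
  Nat.leb (fst I) v && Nat.leb v (snd I).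

Definition in_ddintb (T : list (nat * nat)) (v : nat) : bool :=
  existsb (fun I => in_divalb I v) T.

Definition divals_disjoint (I J : nat * nat) : Prop :=
  forall v, ~ (in_divalb I v = true /\ in_divalb J v = true).

Definition is_discrete_dinterval (d n : nat) (T : list (nat * nat)) : Prop :=
  (1 <= length T <= d)%nat /\
  Forall (fun I => (1 <= fst I)%nat /\ (fst I <= snd I)%nat /\ (snd I <= n)%nat) T /\
  ForallOrdPairs divals_disjoint T.

Definition is_discrete_hypergraph (d n : nat) (T : list (list (nat * nat))) : Prop :=
  Forall (is_discrete_dinterval d n) T.

Definition vertices (n : nat) : list nat := seq 1 n.

Definition dedge (T : list (list (nat * nat))) (i : nat) : list (nat * nat) := nth i T [].

Definition dsize (n : nat) (e : list (nat * nat)) : nat :=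
  length (filter (in_ddintb e) (vertices n)).

Definition is_dmatching (n : nat) (T : list (list (nat * nat))) (M : list nat) : Prop :=
  NoDup M /\ (forall i, In i M -> (i < length T)%nat) /\
  (forall i j, In i M -> In j M -> i <> j ->
     forall v, ~ (in_ddintb (dedge T i) v = true /\ in_ddintb (dedge T j) v = true)).

Definition IsNuLen (n : nat) (T : list (list (nat * nat))) (nu : nat) : Prop :=
  (exists M, is_dmatching n T M /\ list_sum (map (fun i => dsize n (dedge T i)) M) = nu) /\
  (forall M, is_dmatching n T M ->
     (list_sum (map (fun i => dsize n (dedge T i)) M) <= nu)%nat).

Definition is_frac_lcover (n : nat) (T : list (list (nat * nat))) (g : nat -> R) : Prop :=
  (forall v, In v (vertices n) -> 0 <= g v) /\
  forall i, (i < length T)%nat ->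
    INR (dsize n (dedge T i)) <=
    Rsum (map g (filter (in_ddintb (dedge T i)) (vertices n))).

Definition frac_total (n : nat) (g : nat -> R) : R := Rsum (map g (vertices n)).

Definition IsTauStarLen (n : nat) (T : list (list (nat * nat))) (ts : R) : Prop :=
  (forall g, is_frac_lcover n T g -> ts <= frac_total n g) /\
  (forall b, (forall g, is_frac_lcover n T g -> b <= frac_total n g) -> b <= ts).

(* Main.v *)
Require Import Defs.
From Stdlib Require Import Reals List Arith.
Open Scope R_scope.
From Stdlib Require Import Lia Lra ZArith Sorting.Sorted Classical.
Import ListNotations.

Lemma Rsum_app l1 l2 : Rsum (l1 ++ l2) = Rsum l1 + Rsum l2.
Proof. induction l1; simpl; [lra|rewrite IHl1; lra]. Qed.

Lemma Rsum_map_plus {A} (f g : A -> R) l :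
  Rsum (map (fun x => f x + g x) l) = Rsum (map f l) + Rsum (map g l).
Proof. induction l; simpl; [lra|rewrite IHl; lra]. Qed.

Lemma Rsum_map_scal {A} (c : R) (f : A -> R) l :
  Rsum (map (fun x => c * f x) l) = c * Rsum (map f l).
Proof. induction l; simpl; [lra|rewrite IHl; lra]. Qed.

Lemma Rsum_map_le {A} (f g : A -> R) l :
  (forall x, In x l -> f x <= g x) -> Rsum (map f l) <= Rsum (map g l).
Proof.
  induction l; simpl; intros H; [lra|].
  assert (f a <= g a) by auto. assert (Rsum (map f l) <= Rsum (map g l)) by auto. lra.
Qed.

Lemma Rsum_map_ext {A} (f g : A -> R) l :
  (forall x, In x l -> f x = g x) -> Rsum (map f l) = Rsum (map g l).
Proof.
  induction l; simpl; intros H; [lra|].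
  rewrite H by auto. rewrite IHl by auto. lra.
Qed.

Lemma Rsum_map_nonneg {A} (f : A -> R) l :
  (forall x, In x l -> 0 <= f x) -> 0 <= Rsum (map f l).
Proof.
  intros H. replace 0 with (Rsum (map (fun _ : A => 0) l)).
  apply Rsum_map_le; auto. clear H. induction l; simpl; auto. rewrite IHl. lra.
Qed.

Lemma Rsum_map_const {A} (c : R) (l : list A) :
  Rsum (map (fun _ => c) l) = INR (length l) * c.
Proof. induction l; simpl length; rewrite ?S_INR; simpl; [lra|rewrite IHl; lra]. Qed.

Lemma INR_list_sum l : INR (list_sum l) = Rsum (map INR l).
Proof. induction l; simpl; auto. rewrite plus_INR, IHl; auto. Qed.

Lemma Rsum_filter {A} (p : A -> bool) (f : A -> R) l :
  Rsum (map f (filter p l)) = Rsum (map (fun x => if p x then f x else 0) l).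
Proof. induction l; simpl; auto. destruct (p a); simpl; rewrite IHl; lra. Qed.

Lemma Rsum_exchange {A B} (F : A -> B -> R) la lb :
  Rsum (map (fun a => Rsum (map (fun b => F a b) lb)) la) =
  Rsum (map (fun b => Rsum (map (fun a => F a b) la)) lb).
Proof.
  induction la; simpl.
  - induction lb; simpl; auto. rewrite <- IHlb; lra.
  - rewrite IHla. rewrite <- Rsum_map_plus. auto.
Qed.

Lemma Rsum_flat_map {A B} (f : B -> R) (g : A -> list B) l :
  Rsum (map f (flat_map g l)) = Rsum (map (fun a => Rsum (map f (g a))) l).
Proof. induction l; simpl; auto. rewrite map_app, Rsum_app, IHl; auto. Qed.

Lemma filter_flat_map {A B} (p : B -> bool) (g : A -> list B) l :
  filter p (flat_map g l) = flat_map (fun a => filter p (g a)) l.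
Proof. induction l; simpl; auto. rewrite filter_app, IHl; auto. Qed.

Lemma length_flat_map {A B} (g : A -> list B) l :
  length (flat_map g l) = list_sum (map (fun a => length (g a)) l).
Proof. induction l; simpl; auto. rewrite length_app, IHl; auto. Qed.

Lemma filter_all_true {A} (p : A -> bool) l :
  (forall x, In x l -> p x = true) -> filter p l = l.
Proof. induction l; simpl; intros H; auto. rewrite H by auto. rewrite IHl; auto. Qed.

Lemma filter_all_false {A} (p : A -> bool) l :
  (forall x, In x l -> p x = false) -> filter p l = [].
Proof. induction l; simpl; intros H; auto. rewrite H by auto. rewrite IHl; auto. Qed.

Lemma list_sum_map_le {A} (f g : A -> nat) l :
  (forall x, In x l -> (f x <= g x)%nat) -> (list_sum (map f l) <= list_sum (map g l))%nat.
Proof.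
  induction l; simpl; intros H; [lia|].
  assert (f a <= g a)%nat by auto. assert (list_sum (map f l) <= list_sum (map g l))%nat by auto. lia.
Qed.

Lemma list_sum_map_const {A} (c : nat) (l : list A) :
  list_sum (map (fun _ => c) l) = (length l * c)%nat.
Proof. induction l; simpl; auto. Qed.

Lemma in_list_sum_le {A} (f : A -> nat) l x : In x l -> (f x <= list_sum (map f l))%nat.
Proof. induction l; simpl; intros H; [tauto|]. destruct H; subst; [lia|]. specialize (IHl H). lia. Qed.

Definition fl (x : R) : Z := (up x - 1)%Z.

Lemma fl_le x : IZR (fl x) <= x.
Proof. unfold fl. rewrite minus_IZR. destruct (archimed x). lra. Qed.

Lemma fl_gt x : x < IZR (fl x) + 1.
Proof. unfold fl. rewrite minus_IZR. destruct (archimed x). lra. Qed.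

Lemma fl_ge z y : IZR z <= y -> (z <= fl y)%Z.
Proof.
  intros H. pose proof (fl_gt y).
  assert (IZR z < IZR (fl y + 1)) by (rewrite plus_IZR; simpl; lra).
  apply lt_IZR in H1. lia.
Qed.

Lemma fl_mono x y : x <= y -> (fl x <= fl y)%Z.
Proof. intros. apply fl_ge. pose proof (fl_le x). lra. Qed.

Lemma inf_exists (P : R -> Prop) :
  (exists x, P x) -> (forall x, P x -> 0 <= x) ->
  exists v, (forall x, P x -> v <= x) /\ (forall b, (forall x, P x -> b <= x) -> b <= v).
Proof.
  intros [x0 Hx0] Hlb.
  destruct (completeness (fun y => P (- y))) as [s [Hub Hlub]].
  - exists 0. intros y Hy. apply Hlb in Hy. lra.
  - exists (- x0). rewrite Ropp_involutive. auto.
  - exists (- s). split.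
    + intros x Px. assert (- x <= s). { apply Hub. rewrite Ropp_involutive; auto. } lra.
    + intros b Hb. assert (s <= - b). { apply Hlub. intros y Py. apply Hb in Py. lra. } lra.
Qed.

Lemma nat_max_exists (Q : nat -> Prop) (B : nat) :
  (exists k, Q k) -> (forall k, Q k -> (k <= B)%nat) ->
  exists k, Q k /\ forall k', Q k' -> (k' <= k)%nat.
Proof.
  intros Hne Hb. induction B as [|B IH].
  - destruct Hne as [k Hk]. exists k. split; auto. intros k' Hk'. apply Hb in Hk'. apply Hb in Hk. lia.
  - destruct (classic (Q (S B))) as [HS|HS].
    + exists (S B). split; auto.
    + apply IH. intros k Hk. apply Hb in Hk as Hk'. destruct (Nat.eq_dec k (S B)); subst; [tauto|lia].
Qed.

Lemma length_filter_le' {A} (p : A -> bool) l : (length (filter p l) <= length l)%nat.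
Proof. induction l; simpl; auto. destruct (p a); simpl; lia. Qed.

Lemma map_nth_seq_R (l : list R) : map (fun j => nth j l 0) (seq 0 (length l)) = l.
Proof.
  induction l; simpl; auto. f_equal. rewrite <- seq_shift, map_map. simpl. exact IHl.
Qed.

Lemma Rsum_ge_elem {A} (f : A -> R) l a :
  (forall x, In x l -> 0 <= f x) -> In a l -> f a <= Rsum (map f l).
Proof.
  induction l; simpl; intros H Ha; [tauto|]. destruct Ha as [Ha|Ha].
  - subst. assert (0 <= Rsum (map f l)) by (apply Rsum_map_nonneg; auto). lra.
  - assert (0 <= f a0) by auto. specialize (IHl (fun x Hx => H x (or_intror Hx)) Ha). lra.
Qed.

Lemma Rsum_map_lt {A} (f g : A -> R) l : l <> [] ->
  (forall x, In x l -> f x < g x) -> Rsum (map f l) < Rsum (map g l).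
Proof.
  destruct l as [|a l]; [tauto|]. intros _ H. simpl.
  assert (f a < g a) by (apply H; simpl; auto). assert (Rsum (map f l) <= Rsum (map g l)).
  { apply Rsum_map_le. intros. apply Rlt_le, H; simpl; auto. } lra.
Qed.

Lemma Rsum_range (f : nat -> R) lo hi m : (lo <= hi <= m)%nat ->
  Rsum (map (fun j => if andb (Nat.leb lo j) (Nat.ltb j hi) then f j else 0) (seq 0 m))
  = Rsum (map f (seq lo (hi - lo))).
Proof.
  intros Hr.
  replace m with (lo + ((hi - lo) + (m - hi)))%nat at 1 by lia.
  rewrite !seq_app, !map_app, !Rsum_app. simpl.
  rewrite (Rsum_map_ext _ (fun _ => 0) (seq 0 lo)).
  2:{ intros x Hx. apply in_seq in Hx. destruct (Nat.leb_spec lo x); [lia|]. auto. }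
  rewrite (Rsum_map_ext _ f (seq lo (hi - lo))).
  2:{ intros x Hx. apply in_seq in Hx. destruct (Nat.leb_spec lo x); [|lia].
      destruct (Nat.ltb_spec x hi); [|lia]. auto. }
  rewrite (Rsum_map_ext _ (fun _ => 0) (seq _ (m - hi))).
  2:{ intros x Hx. apply in_seq in Hx. destruct (Nat.ltb_spec x hi); [lia|].
      rewrite Bool.andb_false_r. auto. }
  rewrite !Rsum_map_const. lra.
Qed.

Lemma natsum_range (f : nat -> nat) lo hi m : (lo <= hi <= m)%nat ->
  list_sum (map (fun j => if andb (Nat.leb lo j) (Nat.ltb j hi) then f j else 0%nat) (seq 0 m))
  = list_sum (map f (seq lo (hi - lo))).
Proof.
  intros Hr.
  replace m with (lo + ((hi - lo) + (m - hi)))%nat at 1 by lia.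
  rewrite !seq_app, !map_app, !list_sum_app. simpl.
  rewrite (map_ext_in _ (fun _ => 0%nat) (seq 0 lo)).
  2:{ intros x Hx. apply in_seq in Hx. destruct (Nat.leb_spec lo x); [lia|]. auto. }
  rewrite (map_ext_in _ f (seq lo (hi - lo))).
  2:{ intros x Hx. apply in_seq in Hx. destruct (Nat.leb_spec lo x); [|lia].
      destruct (Nat.ltb_spec x hi); [|lia]. auto. }
  rewrite (map_ext_in _ (fun _ => 0%nat) (seq _ (m - hi))).
  2:{ intros x Hx. apply in_seq in Hx. destruct (Nat.ltb_spec x hi); [lia|].
      rewrite Bool.andb_false_r. auto. }
  rewrite !list_sum_map_const. lia.
Qed.

Fixpoint ins (x : R) (l : list R) : list R :=
  match l with
  | [] => [x]
  | y :: l' => if Rlt_dec x y then x :: l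
               else if Rlt_dec y x then y :: ins x l' else l
  end.

Definition srt (l : list R) : list R := fold_right ins [] l.

Lemma ins_in x l z : In z (ins x l) <-> z = x \/ In z l.
Proof.
  induction l as [|y l IH]; simpl.
  - intuition (subst; auto).
  - destruct (Rlt_dec x y); simpl; [intuition (subst; auto)|].
    destruct (Rlt_dec y x); simpl.
    + rewrite IH. intuition (subst; auto).
    + assert (x = y) by lra. subst. intuition (subst; auto).
Qed.

Lemma ins_sorted x l : StronglySorted Rlt l -> StronglySorted Rlt (ins x l).
Proof.
  induction l as [|y l IH]; simpl; intros H.
  - repeat constructor.
  - inversion H; subst.
    destruct (Rlt_dec x y).
    + constructor; auto. constructor; auto. eapply Forall_impl; [|eauto]. intros; simpl in *; lra.
    + destruct (Rlt_dec y x); auto. constructor; auto.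
      apply Forall_forall. intros z Hz. apply ins_in in Hz. destruct Hz; subst; auto.
      rewrite Forall_forall in H3; auto.
Qed.

Lemma srt_in l z : In z (srt l) <-> In z l.
Proof. induction l; simpl; [tauto|]. rewrite ins_in, IHl. intuition (subst; auto). Qed.

Lemma srt_sorted l : StronglySorted Rlt (srt l).
Proof. induction l; simpl; [constructor|]. apply ins_sorted; auto. Qed.

Definition cnt_lt (P : list R) (x : R) : nat :=
  length (filter (fun p => if Rlt_dec p x then true else false) P).
Definition cnt_le (P : list R) (x : R) : nat :=
  length (filter (fun p => if Rle_dec p x then true else false) P).

Lemma cnt_lt_spec P x : StronglySorted Rlt P -> forall j, (j < length P)%nat ->
  (nth j P 0 < x <-> (j < cnt_lt P x)%nat).
Proof.
  induction P as [|p P IH]; simpl; intros HS j Hj; [lia|].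
  inversion HS; subst. unfold cnt_lt in *; simpl.
  destruct (Rlt_dec p x).
  - destruct j; simpl; [split; intros; [lia|auto]|].
    rewrite IH by (auto; lia). lia.
  - rewrite filter_all_false.
    + simpl. destruct j; [split; intros; [tauto|lia]|].
      split; intros; [|lia]. exfalso. rewrite Forall_forall in H2.
      assert (p < nth j P 0) by (apply H2; apply nth_In; lia). lra.
    + intros z Hz. rewrite Forall_forall in H2. specialize (H2 z Hz).
      destruct (Rlt_dec z x); auto. lra.
Qed.

Lemma cnt_le_spec P x : StronglySorted Rlt P -> forall j, (j < length P)%nat ->
  (nth j P 0 <= x <-> (j < cnt_le P x)%nat).
Proof.
  induction P as [|p P IH]; simpl; intros HS j Hj; [lia|].
  inversion HS; subst. unfold cnt_le in *; simpl.
  destruct (Rle_dec p x).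
  - destruct j; simpl; [split; intros; [lia|auto]|].
    rewrite IH by (auto; lia). lia.
  - rewrite filter_all_false.
    + simpl. destruct j; [split; intros; [tauto|lia]|].
      split; intros; [|lia]. exfalso. rewrite Forall_forall in H2.
      assert (p < nth j P 0) by (apply H2; apply nth_In; lia). lra.
    + intros z Hz. rewrite Forall_forall in H2. specialize (H2 z Hz).
      destruct (Rle_dec z x); auto. lra.
Qed.

Lemma cnt_le_len P x : (cnt_le P x <= length P)%nat.
Proof. unfold cnt_le. apply length_filter_le'. Qed.

Lemma sorted_nodup P : StronglySorted Rlt P -> NoDup P.
Proof.
  induction 1; constructor; auto. intros Hin. rewrite Forall_forall in H0.
  specialize (H0 a Hin). lra.
Qed.

Lemma in_nth_idx P (a : R) : In a P -> exists j, (j < length P)%nat /\ nth j P 0 = a.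
Proof. intros H. apply In_nth; auto. Qed.

Definition lefts (H : list (list (R * R))) : list R := flat_map (map fst) H.
Definition PH H := srt (lefts H).
Definition mH H := length (PH H).
Definition pt H j := nth j (PH H) 0.
Definition amem H i j := in_dintb (edge H i) (pt H j).

Lemma in_ivalb_iff I x : in_ivalb I x = true <-> fst I <= x <= snd I.
Proof.
  unfold in_ivalb. destruct (Rle_dec (fst I) x); destruct (Rle_dec x (snd I));
  split; intros; try lra; try discriminate; auto.
Qed.

Lemma in_dintb_iff h x : in_dintb h x = true <-> exists I, In I h /\ fst I <= x <= snd I.
Proof.
  unfold in_dintb. rewrite existsb_exists. split; intros [I [H1 H2]]; exists I;
  rewrite in_ivalb_iff in *; auto.
Qed.

Lemma in_dint_iff h x : in_dint h x <-> exists I, In I h /\ fst I <= x <= snd I.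
Proof. unfold in_dint. rewrite Exists_exists. unfold in_ival. tauto. Qed.

Lemma PH_sorted H : StronglySorted Rlt (PH H).
Proof. apply srt_sorted. Qed.

Lemma comp_left_in H i I : (i < length H)%nat -> In I (edge H i) ->
  exists j, (j < mH H)%nat /\ pt H j = fst I.
Proof.
  intros Hi HI. apply in_nth_idx. unfold PH. apply srt_in. unfold lefts.
  apply in_flat_map. exists (edge H i). split; [apply nth_In; auto|].
  apply in_map; auto.
Qed.

Lemma edge_has_atom d H i : is_dint_hypergraph d H -> (i < length H)%nat ->
  exists j, (j < mH H)%nat /\ amem H i j = true.
Proof.
  intros Hd Hi. unfold is_dint_hypergraph in Hd. rewrite Forall_forall in Hd.
  assert (Hdi : is_dinterval d (edge H i)) by (apply Hd; apply nth_In; auto).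
  destruct Hdi as [[Hl _] [Hle _]].
  destruct (edge H i) as [|I rest] eqn:E; simpl in Hl; [lia|].
  destruct (comp_left_in H i I Hi) as [j [Hj Hp]]; [rewrite E; simpl; auto|].
  exists j. split; auto. unfold amem. rewrite E. apply in_dintb_iff. exists I.
  split; [simpl; auto|]. rewrite Forall_forall in Hle. specialize (Hle I (or_introl eq_refl)). lra.
Qed.

Lemma shared_atom H i i' x : (i < length H)%nat -> (i' < length H)%nat ->
  in_dint (edge H i) x -> in_dint (edge H i') x ->
  exists j, (j < mH H)%nat /\ amem H i j = true /\ amem H i' j = true.
Proof.
  intros Hi Hi' H1 H2. rewrite in_dint_iff in H1, H2.
  destruct H1 as [I [HI HxI]]. destruct H2 as [J [HJ HxJ]].
  destruct (Rle_dec (fst I) (fst J)).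
  - destruct (comp_left_in H i' J Hi' HJ) as [j [Hj Hp]]. exists j. split; auto.
    unfold amem. rewrite !in_dintb_iff. rewrite Hp. split.
    + exists I. split; auto. lra.
    + exists J. split; auto. lra.
  - destruct (comp_left_in H i I Hi HI) as [j [Hj Hp]]. exists j. split; auto.
    unfold amem. rewrite !in_dintb_iff. rewrite Hp. split.
    + exists I. split; auto. lra.
    + exists J. split; auto. lra.
Qed.

Lemma comp_range H I j : (j < mH H)%nat ->
  (fst I <= pt H j <= snd I <-> (cnt_lt (PH H) (fst I) <= j < cnt_le (PH H) (snd I))%nat).
Proof.
  intros Hj. unfold pt.
  pose proof (cnt_lt_spec (PH H) (fst I) (PH_sorted H) j Hj) as A.
  pose proof (cnt_le_spec (PH H) (snd I) (PH_sorted H) j Hj) as B.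
  split; intros.
  - assert (~ nth j (PH H) 0 < fst I) by lra. split; [|apply B; lra].
    destruct (Nat.lt_ge_cases j (cnt_lt (PH H) (fst I))); auto. exfalso. apply H1, A; auto.
  - split; [|apply B; lia]. destruct (Rle_dec (fst I) (nth j (PH H) 0)); auto.
    assert (j < cnt_lt (PH H) (fst I))%nat by (apply A; lra). lia.
Qed.

Lemma comp_nonempty H i I : (i < length H)%nat -> In I (edge H i) -> fst I <= snd I ->
  (cnt_lt (PH H) (fst I) < cnt_le (PH H) (snd I))%nat.
Proof.
  intros Hi HI Hle. destruct (comp_left_in H i I Hi HI) as [j [Hj Hp]].
  pose proof (proj1 (comp_range H I j Hj)). rewrite Hp in H0. specialize (H0 (conj (Rle_refl _) Hle)). lia.
Qed.

Lemma PH_nodup H : NoDup (PH H).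
Proof. apply sorted_nodup, PH_sorted. Qed.

Definition tot H (G : nat -> R) := Rsum (map G (seq 0 (mH H))).
Definition esum H (G : nat -> R) i :=
  Rsum (map (fun j => if amem H i j then G j else 0) (seq 0 (mH H))).
Definition is_acover H (w : nat -> nat) G :=
  (forall j, (j < mH H)%nat -> 0 <= G j) /\
  (forall i, (i < length H)%nat -> INR (w i) <= esum H G i).

Definition Xc H (G : nat -> R) (I : R * R) :=
  Rsum (map (fun j => if in_ivalb I (pt H j) then G j else 0) (seq 0 (mH H))).

Lemma pigeon d H w G i : is_dint_hypergraph d H -> (i < length H)%nat -> is_acover H w G ->
  exists I, In I (edge H i) /\ INR (w i) <= INR d * Xc H G I.
Proof.
  intros Hd Hi [G0 Gc].
  unfold is_dint_hypergraph in Hd. rewrite Forall_forall in Hd.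
  assert (Hdi : is_dinterval d (edge H i)) by (apply Hd; apply nth_In; auto).
  destruct Hdi as [[Hl1 Hl2] _].
  apply NNPP. intros Hno.
  assert (Hlt : forall I, In I (edge H i) -> INR d * Xc H G I < INR (w i)).
  { intros I HI. apply Rnot_le_lt. intros Hc. apply Hno. exists I; auto. }
  assert (E1 : esum H G i <= Rsum (map (Xc H G) (edge H i))).
  { unfold esum, Xc. rewrite <- Rsum_exchange. apply Rsum_map_le. intros j Hj.
    apply in_seq in Hj.
    destruct (amem H i j) eqn:Ea.
    - unfold amem in Ea. apply in_dintb_iff in Ea. destruct Ea as [I [HI HIx]].
      apply (Rsum_ge_elem (fun b => if in_ivalb b (pt H j) then G j else 0) _ I) in HI.
      + assert (in_ivalb I (pt H j) = true) by (apply in_ivalb_iff; auto).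
        rewrite H0 in HI. auto.
      + intros x _. destruct (in_ivalb x (pt H j)); [apply G0; lia|lra].
    - apply Rsum_map_nonneg. intros x _. destruct (in_ivalb x (pt H j)); [apply G0; lia|lra]. }
  assert (E2 : INR d * Rsum (map (Xc H G) (edge H i)) < Rsum (map (fun _ => INR (w i)) (edge H i))).
  { rewrite <- Rsum_map_scal. apply Rsum_map_lt; auto. destruct (edge H i); simpl in *; [lia|discriminate]. }
  rewrite Rsum_map_const in E2.
  pose proof (Gc i Hi).
  assert (INR (length (edge H i)) <= INR d) by (apply le_INR; auto).
  assert (0 <= INR (w i)) by apply pos_INR.
  assert (INR d * INR (w i) <= INR d * esum H G i) by (apply Rmult_le_compat_l; [apply pos_INR|auto]).
  assert (INR d * esum H G i <= INR d * Rsum (map (Xc H G) (edge H i))) by (apply Rmult_le_compat_l; [apply pos_INR|auto]).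
  assert (INR (length (edge H i)) * INR (w i) <= INR d * INR (w i)) by (apply Rmult_le_compat_r; auto).
  lra.
Qed.

Section Round.
Variables (d : nat) (H : list (list (R * R))) (w : nat -> nat) (G : nat -> R).
Hypothesis (hd : (1 <= d)%nat) (Hd : is_dint_hypergraph d H) (HG : is_acover H w G).

Let m := mH H.
Let Gp j := Rmax 0 (G j).
Let D k := INR d * Rsum (map Gp (seq 0 k)).
Let F j := Z.to_nat (fl (D (S j)) - fl (D j)).

Lemma D_S k : D (S k) = D k + INR d * Gp k.
Proof. unfold D. rewrite seq_S, map_app, Rsum_app. simpl. lra. Qed.

Lemma D_mono k k' : (k <= k')%nat -> D k <= D k'.
Proof.
  induction 1; [lra|]. rewrite D_S. assert (0 <= INR d * Gp m0).
  { apply Rmult_le_pos; [apply pos_INR|unfold Gp; apply Rmax_l]. } lra.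
Qed.

Lemma F_tel lo k : list_sum (map F (seq lo k)) = Z.to_nat (fl (D (lo + k)) - fl (D lo)).
Proof.
  induction k.
  - simpl. rewrite Nat.add_0_r. lia.
  - rewrite seq_S, map_app, list_sum_app, IHk. simpl. unfold F.
    replace (lo + S k)%nat with (S (lo + k)) by lia.
    pose proof (fl_mono _ _ (D_mono lo (lo + k) ltac:(lia))).
    pose proof (fl_mono _ _ (D_mono (lo + k) (S (lo + k)) ltac:(lia))). lia.
Qed.

Lemma Gp_eq j : (j < m)%nat -> Gp j = G j.
Proof. intros. unfold Gp. apply Rmax_right. apply (proj1 HG). auto. Qed.

Lemma F_cover i : (i < length H)%nat ->
  (w i <= list_sum (map (fun j => if amem H i j then F j else 0%nat) (seq 0 m)))%nat.
Proof.
  intros Hi. destruct (pigeon d H w G i Hd Hi HG) as [I [HI HX]].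
  set (lo := cnt_lt (PH H) (fst I)). set (hi := cnt_le (PH H) (snd I)).
  assert (Hle : fst I <= snd I).
  { unfold is_dint_hypergraph in Hd. rewrite Forall_forall in Hd.
    destruct (Hd (edge H i) (nth_In _ _ Hi)) as [_ [Hf _]]. rewrite Forall_forall in Hf. auto. }
  assert (Hlohi : (lo < hi)%nat) by (apply (comp_nonempty H i); auto).
  assert (Hhim : (hi <= m)%nat) by apply cnt_le_len.
  assert (EX : Xc H G I = Rsum (map Gp (seq lo (hi - lo)))).
  { unfold Xc. rewrite <- (Rsum_range Gp lo hi m) by lia. apply Rsum_map_ext.
    intros j Hj. apply in_seq in Hj. pose proof (comp_range H I j ltac:(unfold m in *; lia)) as CR.
    fold lo hi in CR. rewrite Gp_eq by lia.
    destruct (in_ivalb I (pt H j)) eqn:E.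
    - apply in_ivalb_iff in E. apply CR in E.
      destruct (Nat.leb_spec lo j); [|lia]. destruct (Nat.ltb_spec j hi); [|lia]. auto.
    - destruct (Nat.leb_spec lo j); destruct (Nat.ltb_spec j hi); simpl; auto.
      assert (in_ivalb I (pt H j) = true) by (apply in_ivalb_iff, CR; lia). congruence. }
  assert (ED : D hi = D lo + INR d * Xc H G I).
  { rewrite EX. unfold D. replace hi with (lo + (hi - lo))%nat at 1 by lia.
    rewrite seq_app, map_app, Rsum_app. simpl. lra. }
  assert (Hfl : (fl (D lo) + Z.of_nat (w i) <= fl (D hi))%Z).
  { apply fl_ge. rewrite plus_IZR, <- INR_IZR_INZ. pose proof (fl_le (D lo)). lra. }
  pose proof (F_tel lo (hi - lo)) as T. replace (lo + (hi - lo))%nat with hi in T by lia.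
  eapply Nat.le_trans; [|apply (list_sum_map_le (fun j => if andb (Nat.leb lo j) (Nat.ltb j hi) then F j else 0%nat))].
  - rewrite natsum_range by lia. rewrite T. lia.
  - intros j Hj. apply in_seq in Hj.
    destruct (Nat.leb_spec lo j); destruct (Nat.ltb_spec j hi); simpl; try lia.
    assert (amem H i j = true).
    { unfold amem. apply in_dintb_iff. exists I. split; auto. apply (comp_range H I j); unfold m in *; fold lo hi; lia. }
    rewrite H2; lia.
Qed.

Lemma F_total : INR (list_sum (map F (seq 0 m))) <= INR d * tot H G.
Proof.
  rewrite F_tel. simpl.
  assert (D 0 = 0) by (unfold D; simpl; lra).
  rewrite H0.
  assert (fl 0 = 0%Z).
  { pose proof (fl_ge 0 0 (Rle_refl _)). pose proof (fl_le 0). apply le_IZR in H2. lia. }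
  rewrite H1, Z.sub_0_r.
  assert (0 <= fl (D m))%Z by (rewrite <- H1; apply fl_mono; rewrite <- H0; apply D_mono; lia).
  rewrite INR_IZR_INZ, Z2Nat.id by auto.
  eapply Rle_trans; [apply fl_le|]. unfold D, tot. right. f_equal.
  apply Rsum_map_ext. intros j Hj. apply in_seq in Hj. apply Gp_eq. lia.
Qed.

Definition gR (x : R) : nat :=
  list_sum (map (fun j => if Req_EM_T x (pt H j) then F j else 0%nat) (seq 0 m)).

Lemma gR_pt j0 : (j0 < m)%nat -> gR (pt H j0) = F j0.
Proof.
  intros Hj0. unfold gR.
  rewrite (map_ext_in _ (fun j => if andb (Nat.leb j0 j) (Nat.ltb j (S j0)) then F j else 0%nat)).
  - rewrite natsum_range by lia. replace (S j0 - j0)%nat with 1%nat by lia. simpl. lia.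
  - intros j Hj. apply in_seq in Hj.
    destruct (Req_EM_T (pt H j0) (pt H j)) as [E|E].
    + assert (j0 = j).
      { eapply (proj1 (NoDup_nth (PH H) 0) (PH_nodup H)); unfold m, mH in *; try lia. exact E. }
      subst. destruct (Nat.leb_spec j j); [|lia]. destruct (Nat.ltb_spec j (S j)); [|lia]. auto.
    + destruct (Nat.leb_spec j0 j); destruct (Nat.ltb_spec j (S j0)); simpl; auto.
      assert (j = j0) by lia. subst. tauto.
Qed.

Lemma PH_map : PH H = map (pt H) (seq 0 m).
Proof. unfold pt, m, mH. symmetry. apply map_nth_seq_R. Qed.

Lemma rounding t : IsTau H w t -> INR t <= INR d * tot H G.
Proof.
  intros [_ Hmin].
  assert (Hc : is_wcover H w (PH H) gR).
  { split.
    - split; [apply PH_nodup|]. intros x Hx. unfold gR.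
      rewrite (map_ext_in _ (fun _ => 0%nat)).
      + rewrite list_sum_map_const. lia.
      + intros j Hj. apply in_seq in Hj. destruct (Req_EM_T x (pt H j)); auto.
        exfalso. apply Hx. subst. unfold pt. apply nth_In. unfold m, mH in *. lia.
    - intros i Hi. unfold edge_sum. rewrite PH_map, map_map.
      rewrite (map_ext_in _ (fun j => if amem H i j then F j else 0%nat)).
      + apply F_cover; auto.
      + intros j Hj. apply in_seq in Hj. unfold amem. destruct (in_dintb _ _); auto. apply gR_pt. lia. }
  specialize (Hmin _ _ Hc). unfold total in Hmin. rewrite PH_map, map_map in Hmin.
  rewrite (map_ext_in _ F) in Hmin.
  2:{ intros j Hj. apply in_seq in Hj. apply gR_pt. lia. }
  apply le_INR in Hmin. pose proof F_total. lra.
Qed.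
End Round.

Lemma flat_map_ext_in' {A B} (f g : A -> list B) l :
  (forall x, In x l -> f x = g x) -> flat_map f l = flat_map g l.
Proof. induction l; simpl; intros H; auto. rewrite H, IHl; auto. Qed.

Section Blow.
Variables (H : list (list (R * R))) (b : nat -> nat).
Hypothesis hb : forall j, (1 <= b j)%nat.

Definition off k := list_sum (map b (seq 0 k)).
Definition nT := off (mH H).
Definition Tcomp (I : R * R) : nat * nat :=
  (S (off (cnt_lt (PH H) (fst I))), off (cnt_le (PH H) (snd I))).
Definition Tedge (h : list (R * R)) := map Tcomp h.
Definition blk j := seq (S (off j)) (b j).

Lemma off_S k : off (S k) = (off k + b k)%nat.
Proof. unfold off. rewrite seq_S, map_app, list_sum_app. simpl. lia. Qed.

Lemma off_mono k k' : (k <= k')%nat -> (off k <= off k')%nat.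
Proof. induction 1; auto. rewrite off_S. lia. Qed.

Lemma off_strict k k' : (k < k')%nat -> (off k < off k')%nat.
Proof. intros. pose proof (off_mono (S k) k' H0). rewrite off_S in H1. pose proof (hb k). lia. Qed.

Lemma off_ge k : (k <= off k)%nat.
Proof. induction k; [simpl; lia|]. rewrite off_S. pose proof (hb k). lia. Qed.

Lemma block_exists k v : (1 <= v <= off k)%nat -> exists j, (j < k)%nat /\ (off j < v <= off (S j))%nat.
Proof.
  induction k; intros Hv; [simpl in Hv; unfold off in Hv; simpl in Hv; lia|].
  destruct (Nat.le_gt_cases v (off k)).
  - destruct IHk as [j [Hj Hj']]; [lia|]. exists j; split; auto.
  - exists k. split; [lia|]. lia.
Qed.

Lemma Tcomp_mem I j v : (j < mH H)%nat -> (off j < v <= off (S j))%nat ->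
  in_divalb (Tcomp I) v = in_ivalb I (pt H j).
Proof.
  intros Hj Hv. pose proof (comp_range H I j Hj) as CR.
  set (lo := cnt_lt (PH H) (fst I)) in *. set (hi := cnt_le (PH H) (snd I)) in *.
  unfold in_divalb, Tcomp. cbn [fst snd]. fold lo hi.
  destruct (in_ivalb I (pt H j)) eqn:E.
  - apply in_ivalb_iff, CR in E.
    assert (off lo <= off j)%nat by (apply off_mono; lia).
    assert (off (S j) <= off hi)%nat by (apply off_mono; lia).
    destruct (Nat.leb_spec (S (off lo)) v); [|lia]. destruct (Nat.leb_spec v (off hi)); [|lia]. auto.
  - destruct (Nat.leb_spec (S (off lo)) v); destruct (Nat.leb_spec v (off hi)); simpl; auto.
    exfalso. assert (in_ivalb I (pt H j) = true); [|congruence].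
    apply in_ivalb_iff, CR. split.
    + destruct (Nat.le_gt_cases lo j); auto. assert (off (S j) <= off lo)%nat by (apply off_mono; lia). lia.
    + destruct (Nat.lt_ge_cases j hi); auto. assert (off hi <= off j)%nat by (apply off_mono; lia). lia.
Qed.

Lemma Tedge_mem h j v : (j < mH H)%nat -> (off j < v <= off (S j))%nat ->
  in_ddintb (Tedge h) v = in_dintb h (pt H j).
Proof.
  intros Hj Hv. unfold in_ddintb, Tedge, in_dintb. induction h; simpl; auto.
  rewrite Tcomp_mem with (j := j) by auto. rewrite IHh. auto.
Qed.

Lemma vert_decomp k : seq 1 (off k) = flat_map blk (seq 0 k).
Proof.
  induction k; [auto|]. rewrite off_S, seq_app, IHk, seq_S, flat_map_app. simpl.
  rewrite app_nil_r. unfold blk. f_equal.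
Qed.

Lemma blk_range j v : In v (blk j) -> (off j < v <= off (S j))%nat.
Proof. unfold blk. intros Hv. apply in_seq in Hv. rewrite off_S. lia. Qed.

Lemma filter_T h : filter (in_ddintb (Tedge h)) (vertices nT) =
  flat_map (fun j => if in_dintb h (pt H j) then blk j else []) (seq 0 (mH H)).
Proof.
  unfold vertices, nT. rewrite vert_decomp, filter_flat_map.
  apply flat_map_ext_in'. intros j Hj. apply in_seq in Hj.
  destruct (in_dintb h (pt H j)) eqn:E.
  - apply filter_all_true. intros v Hv. rewrite Tedge_mem with (j := j); [auto|lia|apply blk_range; auto].
  - apply filter_all_false. intros v Hv. rewrite Tedge_mem with (j := j); [auto|lia|apply blk_range; auto].
Qed.

Lemma dsize_T h : dsize nT (Tedge h) =
  list_sum (map (fun j => if in_dintb h (pt H j) then b j else 0%nat) (seq 0 (mH H))).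
Proof.
  unfold dsize. rewrite filter_T, length_flat_map. f_equal. apply map_ext. intros j.
  destruct (in_dintb h (pt H j)); auto. unfold blk. apply length_seq.
Qed.

Lemma sum_T h (g : nat -> R) : Rsum (map g (filter (in_ddintb (Tedge h)) (vertices nT))) =
  Rsum (map (fun j => if in_dintb h (pt H j) then Rsum (map g (blk j)) else 0) (seq 0 (mH H))).
Proof.
  rewrite filter_T, Rsum_flat_map. apply Rsum_map_ext. intros j _.
  destruct (in_dintb h (pt H j)); auto.
Qed.

Lemma total_T (g : nat -> R) : frac_total nT g = Rsum (map (fun j => Rsum (map g (blk j))) (seq 0 (mH H))).
Proof. unfold frac_total, vertices, nT. rewrite vert_decomp, Rsum_flat_map. auto. Qed.

Lemma FOP_map {A B} (R1 : A -> A -> Prop) (R2 : B -> B -> Prop) (f : A -> B) l :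
  ForallOrdPairs R1 l -> (forall x y, In x l -> In y l -> R1 x y -> R2 (f x) (f y)) ->
  ForallOrdPairs R2 (map f l).
Proof.
  induction 1; simpl; intros Hf; constructor.
  - rewrite Forall_forall in *. intros y Hy. apply in_map_iff in Hy. destruct Hy as [z [<- Hz]].
    apply Hf; simpl; auto.
  - apply IHForallOrdPairs. intros; apply Hf; simpl; auto.
Qed.

Lemma Tedge_discrete d i : is_dint_hypergraph d H -> (i < length H)%nat ->
  is_discrete_dinterval d nT (Tedge (edge H i)).
Proof.
  intros Hd Hi. unfold is_dint_hypergraph in Hd. rewrite Forall_forall in Hd.
  destruct (Hd _ (nth_In H [] Hi)) as [Hl [Hf Hdis]].
  split; [unfold Tedge; rewrite length_map; auto|]. split.
  - apply Forall_forall. intros J HJ. unfold Tedge in HJ. apply in_map_iff in HJ.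
    destruct HJ as [I [<- HI]]. rewrite Forall_forall in Hf. specialize (Hf I HI).
    pose proof (comp_nonempty H i I Hi HI Hf).
    pose proof (off_strict _ _ H0). pose proof (cnt_le_len (PH H) (snd I)).
    pose proof (off_mono _ _ H2). unfold Tcomp, nT, mH in *. simpl. lia.
  - apply FOP_map with (R1 := ivals_disjoint); auto.
    intros I J HI HJ Hij v [Hv1 Hv2].
    assert (Hvr : (1 <= v <= nT)%nat).
    { unfold in_divalb, Tcomp in Hv1. cbn [fst snd] in Hv1. apply andb_prop in Hv1. destruct Hv1 as [A B].
      apply Nat.leb_le in A. apply Nat.leb_le in B.
      pose proof (off_mono _ _ (cnt_le_len (PH H) (snd I))). unfold nT, mH. lia. }
    destruct (block_exists (mH H) v Hvr) as [j [Hj Hjv]].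
    rewrite Tcomp_mem with (j := j) in Hv1, Hv2 by auto.
    apply in_ivalb_iff in Hv1, Hv2. apply (Hij (pt H j)). unfold in_ival. auto.
Qed.
End Blow.

Lemma inf_approx (P : R -> Prop) v : (forall b, (forall x, P x -> b <= x) -> b <= v) ->
  forall eps, 0 < eps -> exists x, P x /\ x <= v + eps.
Proof.
  intros Hl eps He. apply NNPP. intros Hn.
  assert (v + eps <= v); [|lra]. apply Hl. intros x Px. apply Rnot_lt_le. intros Hc.
  apply Hn. exists x. split; auto. lra.
Qed.

Lemma NoDup_map_inj {A B} (f : A -> B) l : NoDup l ->
  (forall x y, In x l -> In y l -> f x = f y -> x = y) -> NoDup (map f l).
Proof.
  induction 1; simpl; intros Hi; constructor.
  - intros Hc. apply in_map_iff in Hc. destruct Hc as [y [Hy Hy']].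
    assert (y = x) by (apply Hi; simpl; auto). subst. tauto.
  - apply IHNoDup. intros; apply Hi; simpl; auto.
Qed.

Section Core.
Variables (d : nat) (alpha : R).
Hypothesis (hd : (1 <= d)%nat) (halpha : 0 < alpha).
Hypothesis Hdisc : forall (n : nat) (T : list (list (nat * nat))),
     (1 <= n)%nat -> is_discrete_hypergraph d n T ->
     forall (ts : R) (nu : nat), IsTauStarLen n T ts -> IsNuLen n T nu ->
       ts <= alpha * INR d * INR nu.
Variables (H : list (list (R * R))) (w : nat -> nat) (nu : nat).
Hypothesis (Hd : is_dint_hypergraph d H) (HNu : IsNu H w nu) (Hne : H <> []).

Definition Wsum := list_sum (map w (seq 0 (length H))).

Lemma w_le_W i : (i < length H)%nat -> (w i <= Wsum)%nat.
Proof. intros. unfold Wsum. apply in_list_sum_le. apply in_seq. lia. Qed.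

Lemma m_pos : (1 <= mH H)%nat.
Proof.
  destruct (edge_has_atom d H 0 Hd) as [j [Hj _]]; [destruct H; simpl; [tauto|lia]|lia].
Qed.

Lemma acover_exists : exists G, is_acover H w G.
Proof.
  exists (fun _ => INR Wsum). split; [intros; apply pos_INR|].
  intros i Hi. destruct (edge_has_atom d H i Hd Hi) as [j [Hj Ha]].
  unfold esum. eapply Rle_trans; [|apply (Rsum_ge_elem (fun j => if amem H i j then INR Wsum else 0) _ j)].
  - rewrite Ha. apply le_INR, w_le_W; auto.
  - intros x _. destruct (amem H i x); [apply pos_INR|lra].
  - apply in_seq; lia.
Qed.

Lemma tot_nonneg G : is_acover H w G -> 0 <= tot H G.
Proof. intros [HG _]. apply Rsum_map_nonneg. intros j Hj. apply in_seq in Hj. apply HG. lia. Qed.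

Variables (delta c eps V : R) (G : nat -> R).
Hypothesis (hdelta : 0 < delta) (hc : 0 < c) (heps : 0 < eps).
Hypothesis (HV : forall G', is_acover H w G' -> V <= tot H G') (HG : is_acover H w G)
  (HGV : tot H G <= V + eps).

Definition bb j := Nat.max 1 (Z.to_nat (up (c * G j))).
Lemma hbb j : (1 <= bb j)%nat.
Proof. apply Nat.le_max_l. Qed.

Lemma bb_bounds j : (j < mH H)%nat -> c * G j < INR (bb j) <= c * G j + 1.
Proof.
  intros Hj. pose proof (proj1 HG j Hj). destruct (archimed (c * G j)) as [A B].
  assert (0 <= c * G j) by (apply Rmult_le_pos; lra).
  assert (0 < up (c * G j))%Z by (apply lt_IZR; simpl; lra).
  unfold bb. rewrite Nat.max_r by lia. rewrite INR_IZR_INZ, Z2Nat.id by lia. lra.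
Qed.

Definition tightb i := if Rle_dec (esum H G i) (INR (w i) + delta) then true else false.
Definition LL := filter tightb (seq 0 (length H)).
Definition TT := map (fun i => Tedge H bb (edge H i)) LL.
Definition nn := nT H bb.
Definition tt := delta / (INR Wsum + delta).

Lemma LL_nodup : NoDup LL.
Proof. apply NoDup_filter, seq_NoDup. Qed.

Lemma LL_in i : In i LL -> (i < length H)%nat /\ esum H G i <= INR (w i) + delta.
Proof.
  unfold LL. rewrite filter_In, in_seq. intros [A B]. split; [lia|].
  unfold tightb in B. destruct (Rle_dec _ _); auto. discriminate.
Qed.

Lemma LL_len : (length LL <= length H)%nat.
Proof. unfold LL. rewrite <- (length_seq (length H) 0) at 2. apply length_filter_le'. Qed.

Lemma dedge_TT k : (k < length LL)%nat -> dedge TT k = Tedge H bb (edge H (nth k LL 0%nat)).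
Proof.
  intros Hk. unfold dedge, TT.
  rewrite (nth_indep _ [] ((fun i => Tedge H bb (edge H i)) 0%nat)) by (rewrite length_map; auto).
  exact (map_nth (fun i => Tedge H bb (edge H i)) LL 0%nat k).
Qed.

Lemma len_TT : length TT = length LL.
Proof. unfold TT. apply length_map. Qed.

Lemma nn_pos : (1 <= nn)%nat.
Proof. unfold nn, nT. pose proof (off_ge bb hbb (mH H)). pose proof m_pos. lia. Qed.

Lemma TT_disc : is_discrete_hypergraph d nn TT.
Proof.
  unfold is_discrete_hypergraph, TT. apply Forall_forall. intros e He.
  apply in_map_iff in He. destruct He as [i [<- Hi]]. apply LL_in in Hi.
  apply Tedge_discrete; auto. apply hbb. tauto.
Qed.

Lemma blk_vert j v : (j < mH H)%nat -> In v (blk bb j) -> In v (vertices nn).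
Proof.
  intros Hj Hv. apply blk_range in Hv. unfold vertices, nn, nT. apply in_seq.
  pose proof (off_mono bb (S j) (mH H) ltac:(lia)). lia.
Qed.

Lemma tt_pos : 0 < tt.
Proof. unfold tt. pose proof (pos_INR Wsum). apply Rdiv_lt_0_compat; lra. Qed.

Lemma tt_le1 : tt <= 1.
Proof.
  unfold tt. pose proof (pos_INR Wsum). apply Rmult_le_reg_r with (INR Wsum + delta); [lra|].
  unfold Rdiv. rewrite Rmult_assoc, Rinv_l by lra. lra.
Qed.

Lemma tt_mul x : 0 <= x <= INR Wsum -> tt * (x + delta) <= delta.
Proof.
  intros Hx. unfold tt. pose proof (pos_INR Wsum).
  unfold Rdiv. rewrite Rmult_assoc, (Rmult_comm (/ _)).
  assert ((x + delta) * / (INR Wsum + delta) <= 1).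
  { apply Rmult_le_reg_r with (INR Wsum + delta); [lra|].
    rewrite Rmult_assoc, Rinv_l by lra. lra. }
  assert (0 <= (x + delta) * / (INR Wsum + delta)).
  { apply Rmult_le_pos; [lra|]. apply Rlt_le, Rinv_0_lt_compat. lra. }
  nra.
Qed.

Lemma esum_lin (A B : nat -> R) (p q : R) i :
  esum H (fun j => p * A j + q * B j) i = p * esum H A i + q * esum H B i.
Proof.
  unfold esum. rewrite <- !Rsum_map_scal, <- Rsum_map_plus. apply Rsum_map_ext.
  intros j _. destruct (amem H i j); lra.
Qed.

Lemma tot_lin (A B : nat -> R) (p q : R) :
  tot H (fun j => p * A j + q * B j) = p * tot H A + q * tot H B.
Proof. unfold tot. rewrite <- !Rsum_map_scal, <- Rsum_map_plus. auto. Qed.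

Lemma dsize_bound i : (i < length H)%nat ->
  c * esum H G i <= INR (dsize nn (Tedge H bb (edge H i))) <= c * esum H G i + INR (mH H).
Proof.
  intros Hi. unfold nn. rewrite dsize_T by apply hbb. rewrite INR_list_sum, map_map.
  unfold esum. rewrite <- Rsum_map_scal. split.
  - apply Rsum_map_le. intros j Hj. apply in_seq in Hj. fold (amem H i j).
    destruct (amem H i j); [|simpl; lra]. pose proof (bb_bounds j ltac:(lia)). lra.
  - replace (INR (mH H)) with (INR (length (seq 0 (mH H))) * 1) by (rewrite length_seq; lra).
    rewrite <- Rsum_map_const, <- Rsum_map_plus. apply Rsum_map_le.
    intros j Hj. apply in_seq in Hj. fold (amem H i j).
    destruct (amem H i j); [|simpl; lra]. pose proof (bb_bounds j ltac:(lia)). lra.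
Qed.

Lemma partA g' : is_frac_lcover nn TT g' -> c * (V - (1 - tt) * tot H G) / tt <= frac_total nn g'.
Proof.
  intros [Hg0 Hgc].
  set (Gb j := Rsum (map g' (blk bb j))).
  assert (Gb0 : forall j, (j < mH H)%nat -> 0 <= Gb j).
  { intros j Hj. apply Rsum_map_nonneg. intros v Hv. apply Hg0. eapply blk_vert; eauto. }
  pose proof tt_pos. pose proof tt_le1.
  set (K j := (1 - tt) * G j + (tt / c) * Gb j).
  assert (HK : is_acover H w K).
  { split.
    - intros j Hj. unfold K. pose proof (proj1 HG j Hj). pose proof (Gb0 j Hj).
      assert (0 <= tt / c) by (apply Rlt_le, Rdiv_lt_0_compat; lra). nra.
    - intros i Hi. unfold K. rewrite esum_lin.
      assert (Eb : 0 <= esum H Gb i).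
      { unfold esum. apply Rsum_map_nonneg. intros j Hj. apply in_seq in Hj.
        destruct (amem H i j); [apply Gb0; lia|lra]. }
      pose proof (proj2 HG i Hi) as Hwi.
      destruct (tightb i) eqn:Et.
      + assert (HiL : In i LL) by (unfold LL; apply filter_In; split; auto; apply in_seq; lia).
        destruct (In_nth LL i 0%nat HiL) as [k [Hk Hki]].
        assert (Hkt : (k < length TT)%nat) by (rewrite len_TT; auto).
        specialize (Hgc k Hkt). rewrite dedge_TT in Hgc by auto. rewrite Hki in Hgc.
        unfold nn in Hgc. rewrite sum_T in Hgc by apply hbb. fold nn in Hgc.
        fold Gb in Hgc.
        assert (Hgc' : INR (dsize nn (Tedge H bb (edge H i))) <= esum H Gb i) by exact Hgc.
        pose proof (proj1 (dsize_bound i Hi)).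
        assert (c * INR (w i) <= esum H Gb i) by nra.
        assert (tt / c * esum H Gb i >= tt * INR (w i)).
        { unfold Rdiv. apply Rle_ge. replace (tt * INR (w i)) with (tt * / c * (c * INR (w i))) by (field; lra).
          apply Rmult_le_compat_l; auto. apply Rmult_le_pos; [lra|]. apply Rlt_le, Rinv_0_lt_compat; lra. }
        nra.
      + unfold tightb in Et. destruct (Rle_dec _ _) as [_|Hn]; [discriminate|].
        apply Rnot_le_lt in Hn.
        pose proof (tt_mul (INR (w i)) (conj (pos_INR _) (le_INR _ _ (w_le_W i Hi)))).
        assert (0 <= tt / c * esum H Gb i) by (apply Rmult_le_pos; auto; apply Rlt_le, Rdiv_lt_0_compat; lra).
        nra. }
  specialize (HV K HK). unfold K in HV. rewrite tot_lin in HV.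
  assert (tot H Gb = frac_total nn g').
  { unfold tot, nn. rewrite total_T by apply hbb. auto. }
  rewrite H2 in HV.
  apply Rmult_le_reg_r with (tt / c); [apply Rdiv_lt_0_compat; lra|].
  replace (c * (V - (1 - tt) * tot H G) / tt * (tt / c)) with (V - (1 - tt) * tot H G) by (field; lra).
  lra.
Qed.

Lemma partB nuT : IsNuLen nn TT nuT -> INR nuT <= c * INR nu + INR (length H) * (c * delta + INR (mH H)).
Proof.
  intros [[M [HM Hval]] _]. destruct HM as [HMnd [HMr HMd]].
  set (f k := nth k LL 0%nat).
  assert (HMr' : forall k, In k M -> (k < length LL)%nat) by (intros; rewrite <- len_TT; auto).
  assert (Hinj : forall x y, In x M -> In y M -> f x = f y -> x = y).
  { intros x y Hx Hy E. eapply (proj1 (NoDup_nth LL 0%nat) LL_nodup); eauto. }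
  assert (HfL : forall k, In k M -> In (f k) LL) by (intros; apply nth_In; auto).
  assert (Hmatch : is_matching H (map f M)).
  { split; [apply NoDup_map_inj; auto|]. split.
    - intros i Hi. apply in_map_iff in Hi. destruct Hi as [k [<- Hk]]. apply LL_in, HfL; auto.
    - intros i i' Hi Hi' Hne' x [Hx Hx'].
      apply in_map_iff in Hi. destruct Hi as [k [<- Hk]].
      apply in_map_iff in Hi'. destruct Hi' as [k' [<- Hk']].
      assert (k <> k') by (intros ->; auto).
      destruct (shared_atom H (f k) (f k') x) as [j [Hj [A1 A2]]]; auto;
        try (apply LL_in, HfL; auto).
      apply (HMd k k' Hk Hk' H0 (S (off bb j))).
      rewrite !dedge_TT by auto. fold (f k) (f k').
      pose proof (hbb j). rewrite !Tedge_mem with (j := j); auto; rewrite ?off_S; try lia. }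
  destruct HNu as [_ HNmax]. specialize (HNmax _ Hmatch).
  unfold match_weight in HNmax. rewrite map_map in HNmax. apply le_INR in HNmax.
  rewrite INR_list_sum, map_map in HNmax.
  rewrite <- Hval, INR_list_sum, map_map.
  eapply Rle_trans.
  - apply (Rsum_map_le _ (fun k => c * INR (w (f k)) + (c * delta + INR (mH H)))).
    intros k Hk. rewrite dedge_TT by auto. fold (f k).
    destruct (LL_in (f k) (HfL k Hk)) as [Hi Ht].
    pose proof (proj2 (dsize_bound (f k) Hi)). nra.
  - rewrite Rsum_map_plus, Rsum_map_scal, Rsum_map_const.
    assert (INR (length M) <= INR (length H)).
    { apply le_INR. eapply Nat.le_trans; [|apply LL_len].
      rewrite <- (length_seq (length LL) 0). apply NoDup_incl_length; auto.
      intros k Hk. apply in_seq. specialize (HMr' k Hk). lia. }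
    assert (0 <= c * delta + INR (mH H)) by (pose proof (pos_INR (mH H)); nra).
    nra.
Qed.

Lemma core : V - eps * (INR Wsum + delta) / delta <=
  alpha * INR d * (INR nu + INR (length H) * delta + INR (length H) * INR (mH H) / c).
Proof.
  destruct (inf_exists (fun x => exists g, is_frac_lcover nn TT g /\ frac_total nn g = x)) as [ts [Hts1 Hts2]].
  { exists (frac_total nn (fun _ => 1)). exists (fun _ => 1). split; auto. split; [intros; lra|].
    intros i Hi. rewrite Rsum_map_const. unfold dsize. lra. }
  { intros x [g [[Hg0 _] <-]]. unfold frac_total. apply Rsum_map_nonneg. auto. }
  assert (HTS : IsTauStarLen nn TT ts).
  { split.
    - intros g Hg. apply Hts1. exists g; auto.
    - intros b Hb. apply Hts2. intros x [g [Hg <-]]. auto. }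
  destruct (nat_max_exists (fun k => exists M, is_dmatching nn TT M /\
       list_sum (map (fun i => dsize nn (dedge TT i)) M) = k) (length TT * nn)) as [nuT [[M [HM HMv]] HmaxT]].
  { exists 0%nat. exists []. split; auto. split; [constructor|]. split; simpl; tauto. }
  { intros k [M [[HMnd [HMr _]] <-]].
    eapply Nat.le_trans; [apply (list_sum_map_le _ (fun _ => nn))|].
    - intros i _. unfold dsize, vertices. rewrite <- (length_seq nn 1) at 2. apply length_filter_le'.
    - rewrite list_sum_map_const. apply Nat.mul_le_mono_r.
      rewrite <- (length_seq (length TT) 0). apply NoDup_incl_length; auto.
      intros i Hi. apply in_seq. specialize (HMr i Hi). lia. }
  assert (HNUT : IsNuLen nn TT nuT).
  { split; [exists M; auto|]. intros M' HM'. apply HmaxT. exists M'. auto. }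
  pose proof (Hdisc nn TT nn_pos TT_disc ts nuT HTS HNUT) as Hmain.
  pose proof (partB nuT HNUT) as HB.
  assert (HA : c * (V - (1 - tt) * tot H G) / tt <= ts).
  { apply (proj2 HTS). apply partA. }
  pose proof tt_pos. pose proof tt_le1. pose proof (tot_nonneg G HG).
  assert (H3 : V - eps / tt <= (V - (1 - tt) * tot H G) / tt).
  { apply Rmult_le_reg_r with tt; auto.
    replace ((V - eps / tt) * tt) with (V * tt - eps) by (field; lra).
    replace ((V - (1 - tt) * tot H G) / tt * tt) with (V - (1 - tt) * tot H G) by (field; lra).
    nra. }
  assert (Heq : eps / tt = eps * (INR Wsum + delta) / delta).
  { unfold tt. pose proof (pos_INR Wsum). field. lra. }
  rewrite <- Heq.
  assert (H4 : c * (V - eps / tt) <= alpha * INR d * (c * INR nu + INR (length H) * (c * delta + INR (mH H)))).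
  { eapply Rle_trans; [|apply Rmult_le_compat_l; [|exact HB]].
    - eapply Rle_trans; [|exact Hmain]. eapply Rle_trans; [|exact HA].
      unfold Rdiv in *. rewrite Rmult_assoc. apply Rmult_le_compat_l; lra.
    - pose proof (pos_INR d). nra. }
  apply Rmult_le_reg_l with c; auto.
  replace (c * (alpha * INR d * (INR nu + INR (length H) * delta + INR (length H) * INR (mH H) / c)))
    with (alpha * INR d * (c * INR nu + INR (length H) * (c * delta + INR (mH H)))) by (field; lra).
  exact H4.
Qed.
End Core.

Lemma small_frac x g : 0 <= x -> 0 < g -> x * (g / (2 * (x + 1))) < g.
Proof.
  intros Hx Hg. apply Rmult_lt_reg_r with (2 * (x + 1)); [lra|].
  replace (x * (g / (2 * (x + 1))) * (2 * (x + 1))) with (x * g) by (field; lra). nra.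
Qed.

Theorem theorem5p3 (d : nat) (alpha : R) (hd : (1 <= d)%nat) (halpha : 0 < alpha)
  (Hdisc : forall (n : nat) (T : list (list (nat * nat))),
     (1 <= n)%nat -> is_discrete_hypergraph d n T ->
     forall (ts : R) (nu : nat), IsTauStarLen n T ts -> IsNuLen n T nu ->
       ts <= alpha * INR d * INR nu) :
  forall (H : list (list (R * R))) (w : nat -> nat),
    is_dint_hypergraph d H ->
    forall (t nu : nat), IsTau H w t -> IsNu H w nu ->
      INR t <= alpha * (INR d ^ 2) * INR nu.
Proof.
  intros H w Hd t nu HT HN.
  assert (Hd0 : 0 < INR d) by (apply lt_0_INR; lia).
  assert (Hnu0 : 0 <= INR nu) by apply pos_INR.
  set (A := alpha * INR d).
  assert (HA0 : 0 <= A) by (unfold A; nra).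
  replace (alpha * (INR d ^ 2) * INR nu) with (INR d * (A * INR nu)) by (unfold A; simpl; ring).
  assert (HA1 : 0 <= A * INR nu) by nra.
  destruct H as [|h0 H0].
  { destruct HT as [_ Hmin].
    assert (Hc : is_wcover [] w [] (fun _ => 0%nat)).
    { split; [split; [constructor|auto]|]. intros i Hi. simpl in Hi. lia. }
    specialize (Hmin _ _ Hc). unfold total in Hmin. simpl in Hmin. assert (t = 0%nat) by lia. subst. rewrite INR_0. apply Rmult_le_pos; lra. }
  set (H := h0 :: H0) in *.
  assert (Hne : H <> []) by discriminate.
  destruct (inf_exists (fun x => exists G, is_acover H w G /\ tot H G = x)) as [V [HV1 HV2]].
  { destruct (acover_exists d hd H w Hd) as [G HG]. exists (tot H G). eauto. }
  { intros x [G [HG <-]]. eapply tot_nonneg; eauto. }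
  assert (HVlow : forall G', is_acover H w G' -> V <= tot H G') by (intros; apply HV1; eauto).
  assert (Happ : forall eps, 0 < eps -> exists G, is_acover H w G /\ tot H G <= V + eps).
  { intros eps He. destruct (inf_approx _ V HV2 eps He) as [x [[G [HG <-]] Hx]]. eauto. }
  set (E := INR (length H)). set (m := INR (mH H)). set (W := INR (Wsum H w)).
  assert (E0 : 0 <= E) by apply pos_INR. assert (m0 : 0 <= m) by apply pos_INR.
  assert (W0 : 0 <= W) by apply pos_INR.
  assert (L1 : forall delta c, 0 < delta -> 0 < c -> V <= A * (INR nu + E * delta + E * m / c)).
  { intros delta c Hdl Hc. apply Rnot_lt_le. intros Hg.
    set (g := V - A * (INR nu + E * delta + E * m / c)).
    assert (g0 : 0 < g) by (unfold g; lra).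
    set (eps := g * delta / (2 * (W + delta))).
    assert (He : 0 < eps) by (unfold eps; apply Rdiv_lt_0_compat; nra).
    destruct (Happ eps He) as [G [HG HGV]].
    pose proof (core d alpha hd halpha Hdisc H w nu Hd HN Hne delta c eps V G Hdl Hc He HVlow HG HGV) as C.
    fold W E m A in C.
    replace (eps * (W + delta) / delta) with (g / 2) in C by (unfold eps; field; lra).
    unfold g in C. lra. }
  assert (L2 : forall delta, 0 < delta -> V <= A * (INR nu + E * delta)).
  { intros delta Hdl. apply Rnot_lt_le. intros Hg.
    set (g := V - A * (INR nu + E * delta)).
    assert (g0 : 0 < g) by (unfold g; lra).
    set (c := 2 * (A * E * m + 1) / g).
    assert (AEm : 0 <= A * E * m) by (apply Rmult_le_pos; [apply Rmult_le_pos|]; auto).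
    assert (Hc : 0 < c) by (unfold c; apply Rdiv_lt_0_compat; lra).
    specialize (L1 delta c Hdl Hc).
    assert (A * (E * m / c) = (A * E * m) * (g / (2 * (A * E * m + 1)))).
    { unfold c. field. split; lra. }
    pose proof (small_frac (A * E * m) g AEm g0).
    unfold g in *. nra. }
  assert (L3 : V <= A * INR nu).
  { apply Rnot_lt_le. intros Hg.
    set (g := V - A * INR nu).
    assert (g0 : 0 < g) by (unfold g; lra).
    set (delta := g / (2 * (A * E + 1))).
    assert (AE : 0 <= A * E) by (apply Rmult_le_pos; auto).
    assert (Hdl : 0 < delta) by (unfold delta; apply Rdiv_lt_0_compat; lra).
    specialize (L2 delta Hdl).
    pose proof (small_frac (A * E) g AE g0).
    fold delta in H1. unfold g in *. nra. }
  apply Rnot_lt_le. intros Hg.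
  assert (HdV : INR d * V < INR t) by (apply Rle_lt_trans with (INR d * (A * INR nu)); [apply Rmult_le_compat_l; lra|auto]).
  set (eps := (INR t / INR d - V) / 2).
  assert (He : 0 < eps).
  { unfold eps. assert (V < INR t / INR d); [|lra].
    apply Rmult_lt_reg_l with (INR d); auto.
    replace (INR d * (INR t / INR d)) with (INR t) by (field; lra). auto. }
  destruct (Happ eps He) as [G [HG HGV]].
  pose proof (rounding d H w G hd Hd HG t HT) as R1.
  assert (INR d * tot H G <= INR d * (V + eps)) by (apply Rmult_le_compat_l; lra).
  assert (INR d * (V + eps) = (INR d * V + INR t) / 2) by (unfold eps; field; lra).
  lra.
Qed.
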